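(* Let $\mathsf{X}$ be a complex random variable with $\mathbb{E}[|\mathsf{X}|^2]=1$, let $L\ge1$, and let $x_1,\dots,x_L$ be i.i.d. copies of $\mathsf{X}$. Assume there is a constant $\delta>0$ with $|x_\ell|^2\ge\delta$ almost surely for all $\ell$. Let $P>0$, $\sigma_{\mathrm s}^2>0$, and define the average conditional CRB $$\overline{\mathrm{CRB}}_{h_{\mathrm s}}=\frac{\sigma_{\mathrm s}^2}{P}\,\mathbb{E}\!\left[\frac{1}{\sum_{\ell=1}^L|x_\ell|^2}\right].$$ Then $$\overline{\mathrm{CRB}}_{h_{\mathrm s}}\le\frac{\sigma_{\mathrm s}^2}{P}\left[\frac1L+\frac{\mathrm{Var}(|\mathsf{X}|^2)}{L^2\delta}\right].$$
   Context: In the sensing model $\boldsymbol y_{\mathrm s}=\sqrt{P}h_{\mathrm s}\boldsymbol x+\boldsymbol z_{\mathrm s}$ with noise $\mathcal{CN}(\boldsymbol 0,\sigma_{\mathrm s}^2\boldsymbol I_L)$, the conditional CRB for estimating $h_{\mathrm s}$ given $\boldsymbol x=(x_1,\dots,x_L)$ is $\sigma_{\mathrm s}^2/(P\|\boldsymbol x\|^2)$, and the average conditional CRB is its expectation over $\boldsymbol x$, as defined in the claim. The symbols are normalized so that $\mathbb{E}[|\mathsf{X}|^2]=1$. *)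

(* Defs.v *)
From HB Require Import structures.
From mathcomp Require Import all_boot all_order all_algebra.
From mathcomp Require Import all_classical all_reals all_analysis.
From mathcomp Require Import complex.
Set Implicit Arguments. Unset Strict Implicit. Unset Printing Implicit Defensive.
Import Order.TTheory GRing.Theory Num.Theory.
Local Open Scope classical_set_scope.
Local Open Scope ring_scope.

Section Defs.
Context (R : realType) (d : measure_display) (T : measurableType d).
Variable (P : probability T R).

Definition cmeasurable (Z : T -> R[i]) : Prop :=
  measurable_fun setT (fun t => complex.Re (Z t)) /\ measurable_fun setT (fun t => complex.Im (Z t)).

Definition cevent (Z : T -> R[i]) (A B : set R) : set T :=
  [set t | A (complex.Re (Z t)) /\ B (complex.Im (Z t))].

(* Z1 and Z2 have the same distribution (on Borel rectangles, a generating
   pi-system of the Borel sigma-algebra of C = R^2) *)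
Definition same_distribution (Z1 Z2 : T -> R[i]) : Prop :=
  forall A B : set R, measurable A -> measurable B ->
    P (cevent Z1 A B) = P (cevent Z2 A B).

Definition mutually_independent (L : nat) (x : 'I_L -> T -> R[i]) : Prop :=
  forall (J : {set 'I_L}) (A B : 'I_L -> set R),
    (forall l, measurable (A l) /\ measurable (B l)) ->
    P (\big[setI/setT]_(l in J) cevent (x l) (A l) (B l))
    = (\prod_(l in J) P (cevent (x l) (A l) (B l)))%E.

Definition crb_cond (L : nat) (Pw sigma2 : R) (x : 'I_L -> T -> R[i]) (t : T) : R :=
  sigma2 / (Pw * \sum_(l < L) ComplexField.Normc.normc (x l t) ^+ 2).

Definition avg_crb (L : nat) (Pw sigma2 : R) (x : 'I_L -> T -> R[i]) : \bar R :=
  expectation P (crb_cond Pw sigma2 x).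

End Defs.

(* Main.v *)
Require Import Defs.
From HB Require Import structures.
From mathcomp Require Import all_boot all_order all_algebra.
From mathcomp Require Import all_classical all_reals all_analysis.
From mathcomp Require Import complex.
From mathcomp Require Import measurable_realfun.
From mathcomp Require Import ring lra.
Import Order.TTheory GRing.Theory Num.Theory.
Local Open Scope classical_set_scope.
Local Open Scope ring_scope.

Section helpers.
Context (R : realType) (d : measure_display) (T : measurableType d).
Variable (P : probability T R).
Local Open Scope ereal_scope.

Lemma law_eq (U1 V1 U2 V2 : T -> R) :
  measurable_fun setT U1 -> measurable_fun setT V1 ->
  measurable_fun setT U2 -> measurable_fun setT V2 ->
  (forall A B, measurable A -> measurable B ->
     P (U1 @^-1` A `&` V1 @^-1` B) = P (U2 @^-1` A `&` V2 @^-1` B)) ->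
  forall F : (R * R)%type -> \bar R, measurable_fun setT F -> (forall z, 0 <= F z) ->
  \int[P]_t F (U1 t, V1 t) = \int[P]_t F (U2 t, V2 t).
Proof.
move=> mU1 mV1 mU2 mV2 h F mF F0.
have mW1 : measurable_fun setT (fun t => (U1 t, V1 t)) by exact: measurable_fun_pair.
have mW2 : measurable_fun setT (fun t => (U2 t, V2 t)) by exact: measurable_fun_pair.
have E1 := ge0_integral_pushforward mW1 P measurableT mF (fun z _ => F0 z).
have E2 := ge0_integral_pushforward mW2 P measurableT mF (fun z _ => F0 z).
rewrite preimage_setT in E1; rewrite preimage_setT in E2.
rewrite -E1 -E2; apply: eq_measure_integral => A mA _.
apply: (measure_unique [set A `*` B | A in measurable & B in measurable] (fun _ => setT)).
- exact: measurable_prod_measurableType.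
- move=> _ _ [A1 mA1 [B1 mB1 <-]] [A2 mA2 [B2 mB2 <-]].
  exists (A1 `&` A2); first exact: measurableI.
  by exists (B1 `&` B2); [exact: measurableI|rewrite setXI].
- by move=> _; exists setT => //; exists setT => //; rewrite setXTT.
- by apply/seteqP; split => // z _; exists 0%N.
- by move=> _ [A1 mA1 [B1 mB1 <-]]; rewrite /pushforward; exact: h.
- by move=> _ /=; rewrite /pushforward /= preimage_setT probability_setT ltry.
- exact: mA.
Qed.

Lemma indep_mul (U V : T -> R) (mU : measurable_fun setT U) (mV : measurable_fun setT V) :
  (forall A B, measurable A -> measurable B ->
     P (U @^-1` A `&` V @^-1` B) = P (U @^-1` A) * P (V @^-1` B)) ->
  forall f g : R -> R, measurable_fun setT f -> measurable_fun setT g ->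
  (forall r, (0 <= f r)%R) -> (forall r, (0 <= g r)%R) ->
  \int[P]_t (f (U t) * g (V t))%:E = \int[P]_t (f (U t))%:E * \int[P]_t (g (V t))%:E.
Proof.
move=> h f g mf mg f0 g0.
pose U' : {mfun T >-> R} := HB.pack U (isMeasurableFun.Build _ _ _ _ U mU).
pose V' : {mfun T >-> R} := HB.pack V (isMeasurableFun.Build _ _ _ _ V mV).
have mW : measurable_fun setT (fun t => (U t, V t)) by exact: measurable_fun_pair.
pose F := fun z : (R * R)%type => (f z.1 * g z.2)%:E.
have mF : measurable_fun setT F.
  apply/measurable_EFinP; apply: measurable_funM.
  - exact: measurableT_comp mf measurable_fst.
  - exact: measurableT_comp mg measurable_snd.
have F0 z : 0 <= F z by rewrite lee_fin mulr_ge0.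
have E1 := ge0_integral_pushforward mW P measurableT mF (fun z _ => F0 z).
rewrite preimage_setT in E1.
transitivity (\int[P]_t F (U t, V t)); first by [].
rewrite -E1.
have pu : forall X, measurable X ->
    (distribution P U' \x distribution P V') X = pushforward P (fun t => (U t, V t)) X.
  move=> X mX; apply: product_measure_unique => //.
rewrite (eq_measure_integral (m1 := pushforward P (fun t => (U t, V t)))
   (distribution P U' \x distribution P V')); last first.
  by move=> A mA _; exact/esym/pu.
rewrite fubini_tonelli1 //.
rewrite /fubini_F /F /=.
under eq_integral => x _.
  under eq_integral => y _ do rewrite EFinM.
  rewrite ge0_integralZl_EFin //; first last.
  - exact/measurable_EFinP.
  - by move=> y _; rewrite lee_fin.
  over.
rewrite /= ge0_integralZr //; first last.
- by apply: integral_ge0 => y _; rewrite lee_fin.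
- by move=> y _; rewrite lee_fin.
- exact/measurable_EFinP.
rewrite (ge0_integral_distribution U' (f := fun x => (f x)%:E)) //; last first.
  exact/measurable_EFinP.
rewrite (ge0_integral_distribution V' (f := fun x => (g x)%:E)) //.
exact/measurable_EFinP.
Qed.


Lemma msum (I : Type) (r : seq I) (f : I -> T -> R) :
  (forall i, measurable_fun setT (f i)) ->
  measurable_fun setT (fun t => (\sum_(i <- r) f i t)%R).
Proof.
move=> mf; elim: r => [|h r ih].
  by under eq_fun do rewrite big_nil; exact: measurable_cst.
by under eq_fun do rewrite big_cons; exact: measurable_funD.
Qed.

Lemma cevent_pre (Z : T -> R[i]) (bb : bool) (A : set R) :
  (fun t => if bb then complex.Re (Z t) else complex.Im (Z t)) @^-1` A =
  cevent Z (if bb then A else setT) (if bb then setT else A).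
Proof. by apply/seteqP; split => t /=; case: bb => //= [[]|[]]. Qed.

Lemma pair_indep (L : nat) (x : 'I_L -> T -> R[i]) (i j : 'I_L) :
  mutually_independent P x -> i != j ->
  forall Ai Bi Aj Bj, measurable Ai -> measurable Bi -> measurable Aj -> measurable Bj ->
  P (cevent (x i) Ai Bi `&` cevent (x j) Aj Bj) =
  P (cevent (x i) Ai Bi) * P (cevent (x j) Aj Bj).
Proof.
move=> hind ij Ai Bi Aj Bj mAi mBi mAj mBj.
have := hind [set i; j]%SET (fun l => if l == i then Ai else Aj)
   (fun l => if l == i then Bi else Bj).
have nij : i \notin [set j]%SET by rewrite inE.
rewrite big_setU1 // big_set1 big_setU1 // big_set1 /= eqxx.
have -> : (j == i) = false by apply/negbTE; rewrite eq_sym.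
apply; move=> l; case: (l == i); split => //.
Qed.

Lemma indep_comp (L : nat) (x : 'I_L -> T -> R[i]) (i j : 'I_L) (bb bb' : bool) :
  mutually_independent P x -> i != j ->
  forall A B, measurable A -> measurable B ->
  P ((fun t => if bb then complex.Re (x i t) else complex.Im (x i t)) @^-1` A `&`
     (fun t => if bb' then complex.Re (x j t) else complex.Im (x j t)) @^-1` B) =
  P ((fun t => if bb then complex.Re (x i t) else complex.Im (x i t)) @^-1` A) *
  P ((fun t => if bb' then complex.Re (x j t) else complex.Im (x j t)) @^-1` B).
Proof.
move=> hind ij A B mA mB; rewrite !cevent_pre.
by apply: pair_indep => //; case: ifP.
Qed.

Lemma intD (f g : T -> R) : measurable_fun setT f -> measurable_fun setT g ->
  (forall t, (0 <= f t)%R) -> (forall t, (0 <= g t)%R) ->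
  \int[P]_t (f t + g t)%:E = \int[P]_t (f t)%:E + \int[P]_t (g t)%:E.
Proof.
move=> mf mg f0 g0; under eq_integral do rewrite EFinD.
apply: ge0_integralD => //.
- by move=> t _; rewrite lee_fin.
- exact/measurable_EFinP.
- by move=> t _; rewrite lee_fin.
- exact/measurable_EFinP.
Qed.

Lemma intZ (k : R) (f : T -> R) : (0 <= k)%R -> measurable_fun setT f ->
  (forall t, (0 <= f t)%R) ->
  \int[P]_t (k * f t)%:E = k%:E * \int[P]_t (f t)%:E.
Proof.
move=> k0 mf f0; under eq_integral do rewrite EFinM.
apply: ge0_integralZl_EFin => //.
- by move=> t _; rewrite lee_fin.
- exact/measurable_EFinP.
Qed.

Lemma intc (c : R) : \int[P]_t c%:E = c%:E.
Proof.
rewrite (_ : (fun t => c%:E) = cst c%:E) // integral_cst //.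
transitivity (c%:E * 1)%E; last exact: mule1.
by congr (_ * _)%E; exact: probability_setT.
Qed.

End helpers.

Lemma eadd_solve (R : realType) (x : \bar R) (c r : R) :
  (x + c%:E = r%:E)%E -> x = (r - c)%:E.
Proof. by case: x => [y| |] //= [<-]; rewrite addrK. Qed.

Lemma normc2 (R : rcfType) (z : R[i]) :
  ComplexField.Normc.normc z ^+ 2 = complex.Re z ^+ 2 + complex.Im z ^+ 2.
Proof. by case: z => a b /=; rewrite sqr_sqrtr // addr_ge0 // sqr_ge0. Qed.

Lemma minv (R : realType) : measurable_fun [set: R] (fun r : R => r^-1).
Proof.
have -> : [set: R] = [set r | r != 0] `|` [set 0].
  apply/seteqP; split => // r _; case: (eqVneq r 0) => [->|h]; [right|left] => //.
apply/measurable_funU; first exact: open_measurable (@open_neq R 0).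
  exact: measurable_set1.
split; last exact: measurable_fun_set1.
apply: open_continuous_measurable_fun; first exact: open_neq.
by move=> r; rewrite inE => /inv_continuous.
Qed.

Lemma ptwise (R : realFieldType) (s l delta : R) : 0 < l -> 0 < delta ->
  l * delta <= s ->
  s^-1 + s / l ^+ 2 <= 2 / l + (s - l) ^+ 2 / (l ^+ 3 * delta).
Proof.
move=> l0 d0 hs.
have s0 : 0 < s by apply: lt_le_trans hs; exact: mulr_gt0.
have -> : s^-1 + s / l ^+ 2 = 2 / l + (s - l) ^+ 2 / (l ^+ 2 * s).
  field; apply/andP; split; exact: lt0r_neq0.
rewrite lerD2l ler_wpM2l ?sqr_ge0 // lef_pV2 ?posrE ?mulr_gt0 ?exprn_gt0 //.
rewrite exprSr -mulrA; apply: ler_wpM2l => //; exact/exprn_ge0/ltW.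
Qed.

Ltac mtac := repeat first [ assumption | apply: measurable_cst | apply: measurable_funD
  | apply: measurable_funB | apply: measurable_funM | apply: measurable_funX
  | apply: msum
  | match goal with H : forall _, measurable_fun _ _ |- _ => apply: H end ].

Ltac ntac := try move=> ?; repeat first [ assumption | apply: sqr_ge0 | apply: mulr_ge0
  | apply: addr_ge0 | apply: ler0n | rewrite invr_ge0 | apply: exprn_ge0
  | (apply: sumr_ge0 => ? _) | (apply: ltW; assumption)
  | match goal with H : forall _ _, 0 <= _ |- _ => apply: H
                  | H : forall _, 0 <= _ |- _ => apply: H end ].

Ltac sides := first [ by mtac | by ntac ].

Theorem lemma2 (R : realType) (d : measure_display) (T : measurableType d)
  (P : probability T R) (L : nat) (X : T -> R[i]) (x : 'I_L -> T -> R[i])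
  (delta Pw sigma2 : R) :
  (1 <= L)%N ->
  cmeasurable X -> (forall l, cmeasurable (x l)) ->
  mutually_independent P x ->
  (forall l, same_distribution P (x l) X) ->
  P.-integrable setT (fun t => ((ComplexField.Normc.normc (X t) ^+ 2)%R)%:E) ->
  expectation P (fun t => ComplexField.Normc.normc (X t) ^+ 2) = 1%E ->
  0 < delta ->
  (forall l, {ae P, forall t, (delta <= ComplexField.Normc.normc (x l t) ^+ 2)%R}) ->
  0 < Pw -> 0 < sigma2 ->
  (avg_crb P Pw sigma2 x
   <= (sigma2 / Pw)%:E *
      ((L%:R)^-1%:E + variance P (fun t => (ComplexField.Normc.normc (X t) ^+ 2)%R) * ((L%:R ^+ 2 * delta)^-1)%:E))%E.
Proof.
move=> L1 [mRX mIX] mx hind hsd _ hE d0 hd Pw0 s0.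
pose a := fun l t => complex.Re (x l t).
pose b := fun l t => complex.Im (x l t).
have ma l : measurable_fun setT (a l) by case: (mx l).
have mb l : measurable_fun setT (b l) by case: (mx l).
pose Y := fun l t => a l t ^+ 2 + b l t ^+ 2.
pose YX := fun t => complex.Re (X t) ^+ 2 + complex.Im (X t) ^+ 2.
have mY l : measurable_fun setT (Y l).
  by apply: measurable_funD; apply: measurable_funX.
have mYX : measurable_fun setT YX.
  by apply: measurable_funD; apply: measurable_funX.
have Y0 l t : 0 <= Y l t by rewrite addr_ge0 ?sqr_ge0.
have YX0 t : 0 <= YX t by rewrite addr_ge0 ?sqr_ge0.
pose S := fun t => \sum_(l < L) Y l t.
have mS : measurable_fun setT S by apply: msum.
have S0 t : 0 <= S t by apply: sumr_ge0 => l _.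
have L0 : (0 < L%:R :> R) by rewrite ltr0n.
have hYX1 : (\int[P]_t (YX t)%:E = 1)%E.
  move: hE; rewrite unlock => <-; apply: eq_integral => t _.
  by rewrite normc2.
have hlaw l (F : (R * R)%type -> \bar R) : measurable_fun setT F -> (forall z, 0 <= F z)%E ->
    (\int[P]_t F (a l t, b l t) = \int[P]_t F (complex.Re (X t), complex.Im (X t)))%E.
  by move=> mF F0; apply: law_eq => //; exact: hsd.
have hY1 l : (\int[P]_t (Y l t)%:E = 1)%E.
  rewrite -hYX1.
  have := hlaw l (fun z => (z.1 ^+ 2 + z.2 ^+ 2)%:E); apply.
    apply/measurable_EFinP; apply: measurable_funD; apply: measurable_funX.
      exact: measurable_fst.
    exact: measurable_snd.
  by move=> z; rewrite lee_fin addr_ge0 ?sqr_ge0.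
have hV : variance P (fun t => ComplexField.Normc.normc (X t) ^+ 2) =
    (\int[P]_t ((YX t - 1) ^+ 2)%:E)%E.
  rewrite /variance unlock hE /= unlock.
  apply: eq_integral => t _; congr EFin.
  by rewrite [LHS]/GRing.mul /= normc2 expr2.
rewrite hV.
case hv : (\int[P]_t ((YX t - 1) ^+ 2)%:E)%E => [v| |]; last first.
- have : (0 <= \int[P]_t ((YX t - 1) ^+ 2)%:E)%E.
    by apply: integral_ge0 => t _; rewrite lee_fin sqr_ge0.
  by rewrite hv.
- rewrite [(+oo * _)%E]muleC gt0_muley ?lte_fin ?invr_gt0 ?mulr_gt0 ?exprn_gt0 //.
  rewrite addey // gt0_muley ?leey // lte_fin divr_gt0 //.
have hQ : (\int[P]_t (YX t ^+ 2)%:E = (v + 1)%:E)%E.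
  have e : (\int[P]_t (((YX t - 1) ^+ 2) + 2 * YX t)%:E =
            \int[P]_t (YX t ^+ 2 + 1)%:E)%E.
    by apply: eq_integral => t _; congr EFin; ring.
  rewrite intD in e; [|sides..].
  rewrite intD in e; [|sides..].
  rewrite intZ ?ler0n // hYX1 hv intc in e.
  have e2 : (\int[P]_t (YX t ^+ 2)%:E + 1%:E = (v + 2)%:E)%E by rewrite -e mule1 -EFinD.
  by rewrite (@eadd_solve _ _ _ _ e2); congr EFin; ring.
have hY2 l : (\int[P]_t (Y l t ^+ 2)%:E = (v + 1)%:E)%E.
  rewrite -hQ.
  have := hlaw l (fun z => ((z.1 ^+ 2 + z.2 ^+ 2) ^+ 2)%:E); apply.
    apply/measurable_EFinP; apply: measurable_funX; apply: measurable_funD;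
      apply: measurable_funX.
      exact: measurable_fst.
    exact: measurable_snd.
  by move=> z; rewrite lee_fin sqr_ge0.
have hind2 i j (U V : T -> R) : i != j -> (U = a i \/ U = b i) -> (V = a j \/ V = b j) ->
    (\int[P]_t (U t ^+ 2 * V t ^+ 2)%:E =
     \int[P]_t (U t ^+ 2)%:E * \int[P]_t (V t ^+ 2)%:E)%E.
  move=> ij hU hVV.
  have [bb ->] : exists bb : bool, U = fun t => if bb then complex.Re (x i t) else complex.Im (x i t).
    by case: hU => ->; [exists true|exists false].
  have [bb' ->] : exists bb' : bool, V = fun t => if bb' then complex.Re (x j t) else complex.Im (x j t).
    by case: hVV => ->; [exists true|exists false].
  apply: (@indep_mul R d T P _ _ _ _ _ (fun r : R => r ^+ 2) (fun r : R => r ^+ 2));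
    try first [by case: bb; [exact: ma|exact: mb] | by case: bb'; [exact: ma|exact: mb] | exact: indep_comp | exact: exprn_measurable
          | exact: sqr_ge0].
have hYY i j : i != j -> (\int[P]_t (Y i t * Y j t)%:E = 1)%E.
  move=> ij.
  have e : forall t, Y i t * Y j t = (a i t ^+ 2 * a j t ^+ 2 + a i t ^+ 2 * b j t ^+ 2) +
     (b i t ^+ 2 * a j t ^+ 2 + b i t ^+ 2 * b j t ^+ 2).
    by move=> t; rewrite /Y; ring.
  under eq_integral do rewrite e.
  rewrite intD; [|sides..].
  rewrite intD; [|sides..].
  rewrite intD; [|sides..].
  rewrite !(hind2 i j) //; try by [left|right].
  have hA l : (\int[P]_t (Y l t)%:E = \int[P]_t (a l t ^+ 2)%:E + \int[P]_t (b l t ^+ 2)%:E)%E.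
    by rewrite intD; [|sides..].
  have i0 : forall U : T -> R, (0 <= \int[P]_t (U t ^+ 2)%:E)%E.
    by move=> U; apply: integral_ge0 => t _; rewrite lee_fin sqr_ge0.
  rewrite -!(ge0_muleDr _ (i0 _) (i0 _)) -(ge0_muleDl _ (i0 _) (i0 _)).
  by rewrite -!hA !hY1 mule1.
have hS1 : (\int[P]_t (S t)%:E = (L%:R)%:E)%E.
  under eq_integral do rewrite /S -sumEFin.
  rewrite ge0_integral_sum //; last 2 first.
  - by move=> l; apply/measurable_EFinP.
  - by move=> l t _; rewrite lee_fin.
  under eq_bigr do rewrite hY1.
  by rewrite sumEFin sumr_const card_ord.
have hSS : (\int[P]_t (S t ^+ 2)%:E = (L%:R ^+ 2 + L%:R * v)%:E)%E.
  have e t : S t ^+ 2 = \sum_(i < L) \sum_(j < L) Y i t * Y j t.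
    rewrite expr2 /S mulr_suml; apply: eq_bigr => i _; by rewrite mulr_sumr.
  under eq_integral do rewrite e -sumEFin.
  rewrite ge0_integral_sum //; last 2 first.
  - move=> i; apply/measurable_EFinP; apply: msum => j.
    exact: measurable_funM.
  - by move=> i t _; rewrite lee_fin; apply: sumr_ge0 => j _; rewrite mulr_ge0.
  have hrow i : (\int[P]_t (\sum_(j < L) Y i t * Y j t)%:E = (L%:R + v)%:E)%E.
    under eq_integral do rewrite -sumEFin.
    rewrite ge0_integral_sum //; last 2 first.
    - by move=> j; apply/measurable_EFinP; exact: measurable_funM.
    - by move=> j t _; rewrite lee_fin mulr_ge0.
    transitivity (\sum_(j < L) (1 + v * (i == j)%:R)%:E)%E.
      apply: eq_bigr => j _; case: (eqVneq i j) => [<-|ij].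
        by under eq_integral do rewrite -expr2; rewrite hY2 mulr1 addrC.
      by rewrite hYY // mulr0 addr0.
    rewrite sumEFin big_split /= sumr_const card_ord -mulr_sumr.
    rewrite (bigD1 i) //= eqxx big1 ?addr0 ?mulr1 //.
    by move=> j; rewrite eq_sym => /negbTE ->.
  under eq_bigr do rewrite hrow.
  rewrite sumEFin sumr_const card_ord; congr EFin.
  by rewrite -mulr_natl; ring.
have hD : (\int[P]_t ((S t - L%:R) ^+ 2)%:E = (L%:R * v)%:E)%E.
  have e : (\int[P]_t ((S t - L%:R) ^+ 2 + (2 * L%:R) * S t)%:E =
            \int[P]_t (S t ^+ 2 + L%:R ^+ 2)%:E)%E.
    by apply: eq_integral => t _; congr EFin; ring.
  rewrite intD in e; [|sides..].
  rewrite intD in e; [|sides..].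
  rewrite intZ in e; [|sides..].
  rewrite hS1 hSS intc -!EFinM -!EFinD in e.
  by rewrite (@eadd_solve _ _ _ _ e); congr EFin; ring.
have hae : {ae P, forall t, L%:R * delta <= S t}.
  apply: filterS (filter_forall _ hd) => t /= h.
  have -> : L%:R * delta = \sum_(l < L) delta by rewrite sumr_const card_ord mulr_natl.
  apply: ler_sum => l _; rewrite /Y /a /b -normc2; exact: h.
have mSi : measurable_fun setT (fun t => (S t)^-1) by exact: measurableT_comp (minv R) mS.
have Ln0 : (L%:R : R) != 0 by rewrite lt0r_neq0.
have dn0 : delta != 0 by rewrite lt0r_neq0.
have hmain : (\int[P]_t ((S t)^-1)%:E + (L%:R^-1)%:E <=
    (2 / L%:R + (L%:R * v) / (L%:R ^+ 3 * delta))%:E)%E.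
  have hSL : (\int[P]_t (S t / L%:R ^+ 2)%:E = (L%:R^-1)%:E)%E.
    under eq_integral do rewrite mulrC.
    rewrite intZ; [|sides..].
    by rewrite hS1 -EFinM; congr EFin; field.
  rewrite -hSL -intD; [|sides..].
  apply: (@le_trans _ _ (\int[P]_t (2 / L%:R + (S t - L%:R) ^+ 2 / (L%:R ^+ 3 * delta))%:E)%E).
    apply: ae_ge0_le_integral => //.
    - by move=> t _; rewrite lee_fin; move: t; ntac.
    - by apply/measurable_EFinP; mtac.
    - by move=> t _; rewrite lee_fin; move: t; ntac.
    - by apply/measurable_EFinP; mtac.
    - by apply: filterS hae => t h _; rewrite lee_fin; exact: ptwise.
  rewrite intD; [|sides..].
  rewrite intc; under eq_integral do rewrite mulrC.
  rewrite intZ; [|sides..].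
  rewrite hD -EFinM -EFinD lee_fin.
  by rewrite [X in _ + X]mulrC.
have eS t : \sum_(l < L) ComplexField.Normc.normc (x l t) ^+ 2 = S t.
  by apply: eq_bigr => l _; rewrite normc2.
rewrite /avg_crb unlock /crb_cond.
under eq_integral => t _ do rewrite eS invfM mulrA.
rewrite intZ; [|sides..].
have i0 : (0 <= \int[P]_t ((S t)^-1)%:E)%E.
  by apply: integral_ge0 => t _; rewrite lee_fin invr_ge0.
move: hmain i0; case: (\int[P]_t ((S t)^-1)%:E)%E => [r| |] // hm _.
move: hm; rewrite -?EFinD lee_fin => hm.
rewrite -!EFinM lee_fin; apply: ler_wpM2l; first by ntac.
have ee : 2 / L%:R + L%:R * v / (L%:R ^+ 3 * delta) =
    L%:R^-1 + v * (L%:R ^+ 2 * delta)^-1 + L%:R^-1.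
  by field; rewrite Ln0 dn0.
rewrite ee in hm; lra.
Qed.
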